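(* Let $0\le r\le n$ and $0\le s\le\min(r,n-r)$, and let $\lambda$ be the kernel of $\Lambda_s^{r,s}$ (so $\lambda$ is a function on $\{0,1,\dots,s\}$). Then for $0\le k\le s$, $$\lambda(k)=(-1)^k\frac{(r-s+1)_k}{[n-r]_k}\,\lambda(0).$$
   Context: Let $\Omega$ be a finite set with $|\Omega|=n\ge1$, $G=S(\Omega)$, $X=\mathcal P(\Omega)$, $X_r=\{x\in X:|x|=r\}$, with $G$ acting on $L^2(X)$ (complex functions on $X$; $L^2(X_r)$ = functions supported on $X_r$) by $(\rho(g)\psi)(x)=\psi(g^{-1}x)$. For $0\le s\le\min(r,n-r)$, $L^2(X_r)_s$ denotes the unique irreducible $G$-subspace of $L^2(X_r)$ isomorphic to the irreducible representation of $G$ associated with the partition $(n-s,s)$ ($L^2(X_r)$ is multiplicity free and contains exactly these). For $0\le r_1,r_2\le n$, $0\le s\le\min(r_1,n-r_1,r_2,n-r_2)$, $\Lambda_s^{r_1,r_2}$ is a nonzero $G$-equivariant map $L^2(X)\to L^2(X)$ sending $L^2(X_{r_1})_s$ into $L^2(X_{r_2})_s$ and vanishing on its orthogonal complement. Its kernel is the function $\lambda$ on integers $k$ with $\max(0,r_2-r_1)\le k\le\min(n-r_1,r_2)$ such that $(\Lambda_s^{r_1,r_2}\psi)(x_2)=\sum_{x_1\in X_{r_1}}\lambda(|x_2\setminus x_1|)\psi(x_1)$ for $\psi\in L^2(X_{r_1})$, $x_2\in X_{r_2}$. Notation: $[\alpha]_k=\alpha(\alpha-1)\cdots(\alpha-k+1)$,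 $(\alpha)_k=\alpha(\alpha+1)\cdots(\alpha+k-1)$, with $[\alpha]_0=(\alpha)_0=1$. *)

(* Defs.v *)
From mathcomp Require Import all_boot all_algebra all_fingroup.
From mathcomp Require Import algC.
Set Implicit Arguments.
Unset Strict Implicit.
Unset Printing Implicit Defensive.
Import GRing.Theory.
Local Open Scope ring_scope.

(* Omega = 'I_n, X = P(Omega) = {set 'I_n}, G = S(Omega) = {perm 'I_n}.      *)
Definition L2 (n : nat) := {ffun {set 'I_n} -> algC^o}.

Definition rho n (g : {perm 'I_n}) (psi : L2 n) : L2 n :=
  [ffun x : {set 'I_n} => psi ((g^-1)%g @: x)].

Definition dotL2 n (f g : L2 n) : algC := \sum_x f x * (g x)^*.

(* psi belongs to L^2(X_r): supported on the r-subsets *)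
Definition supported_on n (r : nat) (psi : L2 n) : Prop :=
  forall x : {set 'I_n}, #|x| != r -> psi x = 0.

Definition deltaX n (y : {set 'I_n}) : L2 n := [ffun x : {set 'I_n} => (x == y)%:R].

(* Polytabloid of the two-row tableau with columns (a i, b i), i < s,
   (top entries a i, bottom entries b i, the remaining n - 2s entries in the
   top row), in the permutation module M^{(n-s,s)}, identified G-equivariantly
   with L^2(X_s) via (tabloid) |-> delta_{set of entries of the second row}:
   e_t = sum over the column group C_t of sgn(sigma) {sigma t}. *)
Definition polytabloid n s (a b : {ffun 'I_s -> 'I_n}) : L2 n :=
  \sum_(E : {set 'I_s}) (-1) ^+ #|E| *:
     deltaX [set (if i \in E then a i else b i) | i : 'I_s].

Definition valid_columns n s (a b : {ffun 'I_s -> 'I_n}) : bool :=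
  [&& injectiveb a, injectiveb b & [forall i, forall j, a i != b j]].

Definition specht n s : {vspace L2 n} :=
  <<[seq polytabloid ab.1 ab.2 |
       ab <- enum [pred ab : {ffun 'I_s -> 'I_n} * {ffun 'I_s -> 'I_n}
                  | valid_columns ab.1 ab.2]]>>%VS.

Definition G_invariant n (V : {vspace L2 n}) : Prop :=
  forall (g : {perm 'I_n}) v, v \in V -> rho g v \in V.

Definition iso_to_partition_rep n s (V : {vspace L2 n}) : Prop :=
  exists T : 'End(L2 n),
    [/\ (T @: V)%VS = specht n s,
        (V :&: lker T)%VS = 0%VS &
        forall (g : {perm 'I_n}) v, v \in V -> T (rho g v) = rho g (T v)].

(* V is "L^2(X_r)_s": a G-subspace of L^2(X_r) isomorphic to the irreducible
   representation of G associated with (n-s,s) (it is unique, by the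
   multiplicity-freeness of L^2(X_r)). *)
Definition is_isotypic_component n r s (V : {vspace L2 n}) : Prop :=
  [/\ forall v, v \in V -> supported_on r v,
      G_invariant V &
      iso_to_partition_rep s V].

Definition rising_factorial (a k : nat) : nat := \prod_(i < k) (a + i).

(* Main.v *)
From HB Require Import structures.
Require Import Defs.
From mathcomp Require Import all_boot all_algebra all_fingroup.
From mathcomp Require Import algC zify ring.
Import GRing.Theory Num.Theory.
Local Open Scope ring_scope.
Set Implicit Arguments.
Unset Strict Implicit.

Lemma dot_sum_r n (f : L2 n) I (r : seq I) (P : pred I) (c : I -> algC) (g : I -> L2 n) :
  dotL2 f (\sum_(i <- r | P i) c i *: g i) = \sum_(i <- r | P i) (c i)^* * dotL2 f (g i).
Proof.
rewrite /dotL2.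
under eq_bigr => x _ do rewrite sum_ffunE rmorph_sum mulr_sumr.
rewrite exchange_big /=; apply: eq_bigr => i _.
rewrite mulr_sumr; apply: eq_bigr => x _.
by rewrite ffunE rmorphM /= mulrCA.
Qed.

Lemma dot_addl n (f g h : L2 n) : dotL2 (f + g) h = dotL2 f h + dotL2 g h.
Proof. by rewrite /dotL2 -big_split; apply: eq_bigr => x _; rewrite ffunE mulrDl. Qed.

Lemma dot_oppl n (f h : L2 n) : dotL2 (- f) h = - dotL2 f h.
Proof. by rewrite /dotL2 -sumrN; apply: eq_bigr => x _; rewrite ffunE mulNr. Qed.

Lemma dot_self_eq0 n (f : L2 n) : dotL2 f f = 0 -> f = 0.
Proof.
move=> /eqP; rewrite /dotL2 psumr_eq0 => [/allP H|x _]; last exact: mul_conjC_ge0.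
apply/ffunP => x; rewrite ffunE; apply/eqP.
by rewrite -mul_conjC_eq0; apply: H; rewrite mem_index_enum.
Qed.

Lemma orth_decomp n (V : {vspace L2 n}) (psi : L2 n) :
  exists2 p, p \in V & forall v, v \in V -> dotL2 (psi - p) v = 0.
Proof.
pose B := vbasis V.
pose f (u : L2 n) : 'rV[algC]_(\dim V) := \row_i dotL2 u B`_i.
have lin_f : linear f.
  move=> a u v; apply/rowP => i; rewrite !mxE /dotL2 mulr_sumr -big_split.
  by apply: eq_bigr => x _; rewrite !ffunE mulrDl mulrA.
pose flM := GRing.isLinear.Build _ _ _ _ f lin_f.
pose fL : {linear _ -> _} := HB.pack f flM.
pose K := lker (linfun fL).
have KP u : u \in K -> forall v, v \in V -> dotL2 u v = 0.
  rewrite memv_ker lfunE => /eqP fu0 v Vv.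
  rewrite (coord_vbasis Vv) dot_sum_r big1 // => i _.
  have := congr1 (fun M : 'rV_ _ => M 0 i) fu0; rewrite !mxE /= => ->.
  by rewrite mulr0.
have cap0 : (V :&: K = 0)%VS.
  apply/eqP; rewrite -subv0; apply/subvP => u /memv_capP [Vu Ku].
  by rewrite memv0; apply/eqP/dot_self_eq0/KP.
have full : (V + K)%VS = fullv.
  apply/eqP; rewrite eqEdim subvf /= dimv_disjoint_sum //.
  have := limg_ker_dim (linfun fL) fullv.
  rewrite capfv => <-; rewrite addnC leq_add2r.
  apply: leq_trans (dimvS (subvf _)) _; rewrite dimvf; have := @dim_matrix algC 1 (\dim V); by move=> ->; rewrite mul1r.
have : psi \in (V + K)%VS by rewrite full memvf.
case/memv_addP => p Vp [q Kq ->]; exists p => // v Vv.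
by rewrite addrC addKr; apply: KP.
Qed.

Lemma rhoE_ n (g : {perm 'I_n}) (h : L2 n) x : rho g h x = h ((g^-1)%g @: x).
Proof. by rewrite ffunE. Qed.

Lemma rho_lin n (g : {perm 'I_n}) I (r : seq I) (P : pred I) (c : I -> algC) (F : I -> L2 n) :
  rho g (\sum_(i <- r | P i) c i *: F i) = \sum_(i <- r | P i) c i *: rho g (F i).
Proof.
apply/ffunP => x; rewrite !ffunE !sum_ffunE; apply: eq_bigr => i _.
by rewrite !ffunE.
Qed.

Lemma rho_delta n (g : {perm 'I_n}) y : rho g (deltaX y) = deltaX (g @: y).
Proof.
apply/ffunP => x; rewrite !ffunE.
have E1 : forall (A : {set 'I_n}), (g^-1)%g @: (g @: A) = A.
  by move=> A; rewrite -imset_comp (eq_imset _ (permK g)) imset_id.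
have E2 : forall (A : {set 'I_n}), g @: ((g^-1)%g @: A) = A.
  by move=> A; rewrite -imset_comp (eq_imset _ (permKV g)) imset_id.
suff -> : ((g^-1)%g @: x == y) = (x == g @: y) by []. by apply/idP/idP => /eqP H; apply/eqP; [rewrite -H E2 | rewrite H E1].
Qed.

Definition dd n (h : L2 n) : L2 n := [ffun y : {set 'I_n} => \sum_(z : 'I_n | z \notin y) h (z |: y)].

Lemma dd_lin n I (r : seq I) (P : pred I) (c : I -> algC) (F : I -> L2 n) :
  dd (\sum_(i <- r | P i) c i *: F i) = \sum_(i <- r | P i) c i *: dd (F i).
Proof.
apply/ffunP => y; rewrite !ffunE !sum_ffunE.
under eq_bigr => z _ do rewrite sum_ffunE.
rewrite exchange_big; apply: eq_bigr => i _.
rewrite ffunE; under eq_bigr do rewrite ffunE. by rewrite [in RHS]ffunE -scaler_sumr.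
Qed.

Lemma dd_rho n (g : {perm 'I_n}) h : dd (rho g h) = rho g (dd h).
Proof.
apply/ffunP => y; rewrite !ffunE.
rewrite [RHS](reindex_inj (@perm_inj _ (g^-1)%g)) /=.
apply: eq_big => [z|z _]; first by rewrite mem_imset; [done | exact: perm_inj].
by rewrite ffunE imsetU1.
Qed.

Definition symd (I : finType) (E F : {set I}) := (E :\: F) :|: (F :\: E).

Lemma in_symd (I : finType) (E F : {set I}) i : (i \in symd E F) = ((i \in E) != (i \in F)).
Proof. by rewrite !inE; case: (i \in E); case: (i \in F). Qed.

Lemma symdK (I : finType) (E F : {set I}) : symd E (symd E F) = F.
Proof. by apply/setP => i; rewrite !in_symd; case: (i \in E); case: (i \in F). Qed.

Lemma symdC (I : finType) (E F : {set I}) : symd E F = symd F E.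
Proof. by apply/setP => i; rewrite !in_symd; case: (i \in E); case: (i \in F). Qed.

Lemma sign_symd (I : finType) (E F : {set I}) :
  (-1) ^+ #|symd E F| = (-1) ^+ #|E| * (-1) ^+ #|F| :> algC.
Proof.
rewrite /symd cardsU.
have -> : (E :\: F) :&: (F :\: E) = set0.
  by apply/setP => i; rewrite !inE; case: (i \in E); case: (i \in F).
rewrite cards0 subn0.
rewrite -(cardsID F E) -(cardsID E F) setIC.
rewrite !exprD mulrACA -expr2 sqrr_sign mul1r //.
Qed.

Section Swap.
Variables (n s : nat) (a b : {ffun 'I_s -> 'I_n}).
Hypotheses (ai : injective a) (bi : injective b) (ab : forall i j, a i != b j).

Definition sw (E : {set 'I_s}) (z : 'I_n) : 'I_n :=
  if [pick i | (a i == z) || (b i == z)] is Some i then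
    (if i \in E then (if a i == z then b i else a i) else z)
  else z.

Lemma pick_a i : [pick j | (a j == a i) || (b j == a i)] = Some i.
Proof.
case: pickP => [j /orP [/eqP/ai -> //| /eqP H] | /(_ i)]; last by rewrite eqxx.
by have := ab i j; rewrite H eqxx.
Qed.

Lemma pick_b i : [pick j | (a j == b i) || (b j == b i)] = Some i.
Proof.
case: pickP => [j /orP [/eqP H | /eqP/bi -> //] | /(_ i)]; last by rewrite eqxx orbT.
by have := ab j i; rewrite H eqxx.
Qed.

Lemma sw_a E i : sw E (a i) = if i \in E then b i else a i.
Proof. by rewrite /sw pick_a eqxx. Qed.

Lemma sw_b E i : sw E (b i) = if i \in E then a i else b i.
Proof. by rewrite /sw pick_b (negbTE (ab i i)). Qed.

Lemma sw_out E z : (forall i, (a i != z) && (b i != z)) -> sw E z = z.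
Proof.
move=> H; rewrite /sw; case: pickP => // i /orP [] /eqP Hz;
by have := H i; rewrite Hz eqxx ?andbF.
Qed.

Lemma sw_cases z : [\/ exists i, z = a i, exists i, z = b i |
  forall i, (a i != z) && (b i != z)].
Proof.
case: (pickP (fun i => (a i == z) || (b i == z))) => [i /orP [/eqP <-|/eqP <-] | H].
- by apply: Or31; exists i.
- by apply: Or32; exists i.
by apply: Or33 => i; have := H i; case: (a i == z); case: (b i == z).
Qed.

Lemma sw_comp E F z : sw E (sw F z) = sw (symd E F) z.
Proof.
case: (sw_cases z) => [[i ->]|[i ->]|H].
- rewrite [sw (symd _ _) _]sw_a [sw F _]sw_a in_symd; case: (i \in F); rewrite ?sw_a ?sw_b;
  by case: (i \in E).
- rewrite [sw (symd _ _) _]sw_b [sw F _]sw_b in_symd; case: (i \in F); rewrite ?sw_a ?sw_b;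
  by case: (i \in E).
by rewrite !sw_out.
Qed.

Lemma sw0 z : sw set0 z = z.
Proof. by rewrite /sw; case: pickP => // i _; rewrite inE. Qed.

Lemma swK E : involutive (sw E).
Proof.
move=> z; rewrite sw_comp.
have -> : symd E E = set0 by apply/setP => i; rewrite in_symd inE eqxx.
exact: sw0.
Qed.

Definition swp E : {perm 'I_n} := perm (inv_inj (swK E)).

Lemma swpE E z : swp E z = sw E z.
Proof. by rewrite permE. Qed.

Lemma swpV E : (swp E)^-1%g = swp E.
Proof.
apply/permP => z; apply: (@perm_inj _ (swp E)).
by rewrite permKV !swpE swK.
Qed.

End Swap.

Section Swap2.
Variables (n s : nat) (a b : {ffun 'I_s -> 'I_n}).
Hypotheses (ai : injective a) (bi : injective b) (ab : forall i j, a i != b j).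
Local Notation swp := (swp ai bi ab).
Local Notation sw_a := (sw_a ai ab).
Local Notation sw_b := (sw_b bi ab).
Local Notation sw_comp := (sw_comp ai bi ab).
Local Notation swpE := (swpE ai bi ab).
Local Notation swpV := (swpV ai bi ab).

Definition kap (h : L2 n) : L2 n :=
  \sum_(E : {set 'I_s}) (-1) ^+ #|E| *: rho (swp E) h.

Lemma kapE h (y : {set 'I_n}) : kap h y = \sum_(E : {set 'I_s}) (-1) ^+ #|E| * h (swp E @: y).
Proof. by rewrite /kap sum_ffunE; apply: eq_bigr => E _; rewrite !ffunE swpV. Qed.

Lemma symdK2 (I : finType) (E F : {set I}) : symd (symd F E) E = F.
Proof. by apply/setP => i; rewrite !in_symd; case: (i \in E); case: (i \in F). Qed.

Lemma kap_small h (y : {set 'I_n}) : (#|y| < s)%N -> kap h y = 0.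
Proof.
move=> lty.
have [i /eqP Hi] : exists i, (a i \in y) == (b i \in y).
  apply/existsP; apply: contraLR lty => /existsPn H; rewrite -leqNgt.
  pose c i := if a i \in y then a i else b i.
  have ci : injective c.
    move=> i j; rewrite /c; case: ifP; case: ifP => _ _;
    by [move/ai | move/bi | move=> E; have := ab i j; rewrite E eqxx | move=> E; have := ab j i; rewrite E eqxx].
  have -> : s = #|[set c i | i in 'I_s]| by rewrite card_imset // card_ord.
  apply/subset_leq_card/subsetP => _ /imsetP [i _ ->]; rewrite /c.
  have := H i; case: ifP => //; by case: (b i \in y).
have fixy : swp [set i] @: y = y.
  apply/eqP; rewrite eqEcard card_imset ?leqnn ?andbT; last exact: perm_inj.
  apply/subsetP => _ /imsetP [z yz ->]; rewrite swpE.
  case: (sw_cases a b z) => [[j ez]|[j ez]|H].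
  - rewrite ez sw_a inE; case: eqP => [Eji|_]; last by rewrite -ez.
    by subst j; rewrite -Hi -ez.
  - rewrite ez sw_b inE; case: eqP => [Eji|_]; last by rewrite -ez.
    by subst j; rewrite Hi -ez.
  by rewrite sw_out.
have eqE : forall E, swp (symd E [set i]) @: y = swp E @: y.
  move=> E; rewrite -{2}fixy -imset_comp; apply: eq_imset => z /=.
  by rewrite !swpE sw_comp.
have : kap h y = - kap h y.
  rewrite {1}kapE (reindex_inj (@can_inj _ _ (fun E => symd E [set i]) (fun E => symd E [set i]) (fun E => symdK2 [set i] E))) /= kapE.
  rewrite -sumrN; apply: eq_bigr => E _.
  by rewrite eqE sign_symd cards1 expr1 mulrN1 mulNr.
move/eqP; rewrite -subr_eq0 opprK -mulr2n mulrn_eq0 /= => /eqP //.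
Qed.

Definition col (F : {set 'I_s}) := [set (if i \in F then a i else b i) | i in 'I_s].

Lemma swp_col E F : swp E @: col F = col (symd E F).
Proof.
rewrite -imset_comp; apply: eq_imset => i /=; rewrite swpE in_symd.
by case: (i \in F); rewrite ?sw_a ?sw_b; case: (i \in E).
Qed.

Lemma polyE : polytabloid a b = \sum_(F : {set 'I_s}) (-1) ^+ #|F| *: deltaX (col F).
Proof. by []. Qed.

Lemma kap_poly : kap (polytabloid a b) = (#|{set 'I_s}|)%:R *: polytabloid a b.
Proof.
have key : forall E : {set 'I_s}, (-1) ^+ #|E| *: rho (swp E) (polytabloid a b) = polytabloid a b.
  move=> E; rewrite polyE rho_lin scaler_sumr.
  rewrite (reindex_inj (can_inj (symdK E))) /=; apply: eq_bigr => F _.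
  rewrite rho_delta swp_col symdK scalerA sign_symd mulrA -expr2 sqrr_sign mul1r //.
rewrite /kap (eq_bigr (fun=> polytabloid a b)) => [|E _]; last exact: key.
by rewrite sumr_const scaler_nat.
Qed.

Lemma dd_kap h : dd (kap h) = kap (dd h).
Proof. by rewrite /kap dd_lin; apply: eq_bigr => E _; rewrite dd_rho. Qed.

End Swap2.

Lemma ddZ n (c : algC) (h : L2 n) : dd (c *: h) = c *: dd h.
Proof.
apply/ffunP => y; rewrite !ffunE.
under eq_bigr do rewrite ffunE.
by rewrite -scaler_sumr.
Qed.

Lemma iso_inj n (Ws : {vspace L2 n}) (T : 'End(L2 n)) u v :
  (Ws :&: lker T)%VS = 0%VS -> u \in Ws -> v \in Ws -> T u = T v -> u = v.
Proof.
move=> Tinj Wu Wv Tuv; apply/eqP; rewrite -subr_eq0 -memv0 -Tinj memv_cap.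
by rewrite memvB //= memv_ker linearB /= Tuv subrr.
Qed.

Lemma dd_good n s (Ws : {vspace L2 n}) :
  G_invariant Ws -> iso_to_partition_rep s Ws ->
  forall (a b : {ffun 'I_s -> 'I_n}), valid_columns a b ->
  forall u, u \in Ws -> (exists2 T : 'End(L2 n), 
     (Ws :&: lker T)%VS = 0%VS /\ (forall (g : {perm 'I_n}) v, v \in Ws -> T (rho g v) = rho g (T v))
     & T u = polytabloid a b) ->
  forall y : {set 'I_n}, (#|y| < s)%N -> dd u y = 0.
Proof.
move=> Ginv _ a b /and3P [/injectiveP ai /injectiveP bi /forallP ab'] u Wu [T [Tinj Teq] Tu] y lty.
have ab : forall i j, a i != b j by move=> i j; exact: (forallP (ab' i)).
pose K := kap ai bi ab.
pose c : algC := (#|{set 'I_s}|)%:R.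
have KW : K u \in Ws.
  by apply: memv_suml => E _; apply: memvZ; apply: Ginv.
have TK : T (K u) = K (T u).
  rewrite /K /kap linear_sum; apply: eq_bigr => E _.
  by rewrite linearZ /= Teq.
have H1 : K u = c *: u.
  apply: (iso_inj Tinj KW (memvZ _ Wu)).
  by rewrite TK Tu /K kap_poly linearZ /= Tu.
have : (c *: dd u) y = 0.
  by rewrite -ddZ -H1 /K dd_kap kap_small.
rewrite ffunE => /eqP; rewrite mulf_eq0 => /orP [|/eqP //].
rewrite pnatr_eq0 => /eqP H0; exfalso; suff : (0 < #|{set 'I_s}|)%N by rewrite H0. by apply/card_gt0P; exists set0.
Qed.

Lemma dd_Ws n s (Ws : {vspace L2 n}) :
  G_invariant Ws -> iso_to_partition_rep s Ws ->
  forall v, v \in Ws -> forall y : {set 'I_n}, (#|y| < s)%N -> dd v y = 0.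
Proof.
move=> Ginv iso; have [T [Timg Tinj Teq]] := iso.
move=> v Wv y lty.
pose X := [seq polytabloid ab.1 ab.2 |
       ab <- enum [pred ab : {ffun 'I_s -> 'I_n} * {ffun 'I_s -> 'I_n}
                  | valid_columns ab.1 ab.2]].
have TvX : T v \in span (in_tuple X) by rewrite -[span _]/(specht n s) -Timg memv_img.
have Tv := coord_span TvX.
have ex : forall i : 'I_(size X), exists u, (u \in Ws) && (T u == X`_i).
  move=> i; have : X`_i \in (T @: Ws)%VS.
    by rewrite Timg; apply: memv_span; apply: mem_nth.
  by case/memv_imgP => u Wu ->; exists u; rewrite Wu eqxx.
pose u i := xchoose (ex i).
have uP i : (u i \in Ws) && (T (u i) == X`_i) := xchooseP (ex i).
pose w := \sum_i coord (in_tuple X) i (T v) *: u i.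
have Ww : w \in Ws by apply: memv_suml => i _; apply: memvZ; case/andP: (uP i).
have -> : v = w.
  apply: (iso_inj Tinj Wv Ww); rewrite {1}Tv /w linear_sum; apply: eq_bigr => i _.
  by rewrite linearZ /=; case/andP: (uP i) => _ /eqP ->.
rewrite /w dd_lin sum_ffunE big1 // => i _.
have [Wu /eqP Tu] := andP (uP i).
have : X`_i \in X by apply: mem_nth.
case/mapP => ab; rewrite mem_enum inE => vab XE.
have E0 : dd (u i) y = 0.
  apply: (dd_good Ginv iso vab Wu) => //.
  by exists T => //; rewrite Tu.
by rewrite ffunE E0 scaler0.
Qed.

Lemma exists_subset (T : finType) (A : {set T}) m :
  (m <= #|A|)%N -> exists B : {set T}, B \subset A /\ #|B| = m.
Proof.
elim: m => [|m IH] lt; first by exists set0; rewrite sub0set cards0.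
have [B [BA cB]] := IH (ltnW lt).
have : (0 < #|A :\: B|)%N by rewrite cardsD (setIidPr BA) cB subn_gt0.
case/card_gt0P => z; rewrite inE => /andP [zB zA].
exists (z |: B); split; first by rewrite subUset sub1set zA BA.
by rewrite cardsU1 zB cB.
Qed.

Lemma recurrence n r s (Vr Ws : {vspace L2 n}) (Lam : 'End(L2 n)) (lambda : nat -> algC) :
  (r <= n)%N -> (s <= minn r (n - r))%N ->
  is_isotypic_component s s Ws ->
  (Lam @: Vr <= Ws)%VS ->
  (forall psi, (forall v, v \in Vr -> dotL2 psi v = 0) -> Lam psi = 0) ->
  (forall psi, supported_on r psi ->
     forall x2 : {set 'I_n}, #|x2| = s ->
       Lam psi x2 = \sum_(x1 : {set 'I_n} | #|x1| == r)
                       lambda #|x2 :\: x1| * psi x1) ->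
  forall k, (k < s)%N ->
    lambda k * (r - s + 1 + k)%:R + lambda k.+1 * (n - r - k)%:R = 0.
Proof.
move=> rn; rewrite leq_min => /andP [sr snr] [_ Ginv iso] hsub hperp hker k ks.
have [x1 [_ cx1]] : exists x1 : {set 'I_n}, x1 \subset setT /\ #|x1| = r.
  by apply: exists_subset; rewrite cardsT card_ord.
have [Y1 [Y1x1 cY1]] : exists Y1 : {set 'I_n}, Y1 \subset x1 /\ #|Y1| = (s - 1 - k)%N.
  by apply: exists_subset; rewrite cx1; lia.
have [Y2 [Y2x1 cY2]] : exists Y2 : {set 'I_n}, Y2 \subset ~: x1 /\ #|Y2| = k.
  by apply: exists_subset; rewrite cardsCs setCK card_ord cx1; lia.
pose y := Y1 :|: Y2.
have Y2x1' : forall z, z \in Y2 -> z \notin x1.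
  by move=> z zY; have := subsetP Y2x1 z zY; rewrite inE.
have cy : #|y| = (s - 1 - k + k)%N.
  rewrite cardsU (_ : Y1 :&: Y2 = set0) ?cards0 ?subn0 ?cY1 ?cY2 //.
  apply/setP => t; rewrite !inE; case tY2 : (t \in Y2); rewrite ?andbF ?andbT //.
  by apply: (contraNF (subsetP Y1x1 t)); apply: Y2x1'.
pose f := Lam (deltaX x1).
have fW : f \in Ws.
  have [p Vp Hp] := orth_decomp Vr (deltaX x1).
  have -> : f = Lam p + Lam (deltaX x1 - p) by rewrite -linearD /= addrC subrK.
  rewrite (hperp _ Hp) addr0; apply: (subvP hsub); exact: memv_img.
have ddf : dd f y = 0 by apply: (dd_Ws Ginv iso fW); rewrite cy; lia.
have fval : forall x2 : {set 'I_n}, #|x2| = s -> f x2 = lambda #|x2 :\: x1|.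
  move=> x2 cx2; rewrite /f hker //; last first.
    by move=> x Hx; rewrite ffunE; case: eqP => // Ex; rewrite Ex cx1 eqxx in Hx.
  rewrite (bigD1 x1) ?cx1 //= ffunE eqxx mulr1 big1 ?addr0 // => x /andP [_ xx1].
  by rewrite ffunE (negbTE xx1) mulr0.
move: ddf; rewrite ffunE.
rewrite (bigID (fun z => z \in x1)) /=.
rewrite (eq_bigr (fun=> lambda k)) => [|z /andP [zy zx1]]; last first.
  rewrite fval; last by rewrite cardsU1 zy cy; lia.
  congr (lambda _); rewrite -cY2.
  have zY2 : z \notin Y2 by apply: contra zy => zY; rewrite inE zY orbT.
  apply: eq_card => t; rewrite !inE.
  case: (t =P z) => [->|_] /=; first by rewrite zx1 (negbTE zY2).
  case tY2 : (t \in Y2); first by rewrite Y2x1' ?orbT.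
  by rewrite orbF; case tY1 : (t \in Y1); rewrite ?andbF // (subsetP Y1x1 _ tY1).
rewrite [X in _ + X = _](eq_bigr (fun=> lambda k.+1)) => [|z /andP [zy zx1]]; last first.
  rewrite fval; last by rewrite cardsU1 zy cy; lia.
  have zY2 : z \notin Y2 by apply: contra zy => zY; rewrite inE zY orbT.
  have -> : (z |: y) :\: x1 = z |: Y2.
    apply/setP => t; rewrite !inE.
    case: (t =P z) => [->|_] /=; first by rewrite zx1.
    case tY2 : (t \in Y2); first by rewrite Y2x1' ?orbT.
    by rewrite orbF; case tY1 : (t \in Y1); rewrite ?andbF // (subsetP Y1x1 _ tY1).
  by rewrite cardsU1 zY2 cY2.
have -> : \sum_(z | (z \notin y) && (z \in x1)) lambda k = lambda k *+ #|x1 :\: Y1|.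
  rewrite -sumr_const; apply: eq_bigl => z; rewrite !inE.
  case zx1 : (z \in x1); case zY1 : (z \in Y1); case zY2 : (z \in Y2); rewrite /= ?andbF ?andbT //;
  by [have := Y2x1' z zY2; rewrite zx1 | have := subsetP Y1x1 z zY1; rewrite zx1].
have -> : \sum_(z | (z \notin y) && ~~ (z \in x1)) lambda k.+1 = lambda k.+1 *+ #|~: x1 :\: Y2|.
  rewrite -sumr_const; apply: eq_bigl => z; rewrite !inE.
  case zx1 : (z \in x1); case zY1 : (z \in Y1); case zY2 : (z \in Y2); rewrite /= ?andbF ?andbT //;
  by [have := Y2x1' z zY2; rewrite zx1 | have := subsetP Y1x1 z zY1; rewrite zx1].
have cCx1 : #|~: x1| = (n - r)%N by have := cardsC x1; rewrite card_ord cx1 => H; rewrite -[n in RHS]H addKn.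
rewrite cardsD (setIidPr Y1x1) cardsD (setIidPr Y2x1) cCx1 cx1 cY1 cY2.
rewrite !mulr_natr.
have -> : (r - (s - 1 - k))%N = (r - s + 1 + k)%N by clear -ks sr; lia.
by [].
Qed.

Theorem mainTheorem2 (n r s : nat) (Vr Ws : {vspace L2 n})
  (Lam : 'End(L2 n)) (lambda : nat -> algC) :
  (1 <= n)%N -> (r <= n)%N -> (s <= minn r (n - r))%N ->
  is_isotypic_component r s Vr ->
  is_isotypic_component s s Ws ->
  (* Lam = Lambda_s^{r,s}: nonzero, G-equivariant, maps L^2(X_r)_s into
     L^2(X_s)_s and vanishes on the orthogonal complement of L^2(X_r)_s *)
  Lam != 0 ->
  (forall (g : {perm 'I_n}) psi, Lam (rho g psi) = rho g (Lam psi)) ->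
  (Lam @: Vr <= Ws)%VS ->
  (forall psi, (forall v, v \in Vr -> dotL2 psi v = 0) -> Lam psi = 0) ->
  (* lambda is the kernel of Lam *)
  (forall psi, supported_on r psi ->
     forall x2 : {set 'I_n}, #|x2| = s ->
       Lam psi x2 = \sum_(x1 : {set 'I_n} | #|x1| == r)
                       lambda #|x2 :\: x1| * psi x1) ->
  forall k, (k <= s)%N ->
    lambda k = (-1) ^+ k * (rising_factorial (r - s + 1) k)%:R
                 / ((n - r) ^_ k)%:R * lambda 0%N.
Proof.
move=> n1 rn hs isoR isoS Lam0 Leq hsub hperp hker.
have snr : (s <= n - r)%N by move: hs; rewrite leq_min => /andP [].
elim => [|k IH] ks.
  by rewrite /rising_factorial big_ord0 expr0 mul1r ffactn0 divr1 mul1r.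
have rec := recurrence rn hs isoS hsub hperp hker ks.
have Bnz : (n - r - k)%:R != 0 :> algC.
  by rewrite pnatr_eq0 -lt0n subn_gt0; apply: leq_trans ks snr.
have Fnz : ((n - r) ^_ k)%:R != 0 :> algC.
  by rewrite pnatr_eq0 -lt0n ffact_gt0; apply: leq_trans (ltnW ks) snr.
have E : lambda k.+1 * (n - r - k)%:R = - (lambda k * (r - s + 1 + k)%:R).
  by apply/eqP; rewrite -addr_eq0 addrC rec.
apply: (mulIf Bnz); rewrite E (IH (ltnW ks)).
rewrite /rising_factorial big_ord_recr /= ffactnSr !natrM exprS.
rewrite -/(rising_factorial (r - s + 1) k).
field.
by rewrite Fnz Bnz.
Qed.
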